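(* Assume $|V|\ge 3$. Suppose the notion of strategic manipulation is modified by dropping the requirement that all colluders in $C$ have the same most preferred value in the type vector $\vec\theta$ of condition (b). Then there is no $(c,f)$-resilient consensus protocol for any $c\ge 2$. Moreover, if in addition condition (b) is strengthened to require that no colluder is worse off (in addition to some colluder being strictly better off), there is still no $(c,f)$-resilient consensus protocol for any $c\ge 2$ and $f\ge 1$.
   Context: Model. There are $n$ agents $\Pi=\{1,\dots,n\}$ proceeding in synchronous rounds $1,2,\dots$. In each round every agent first chooses, for each agent $j$, a message to send to $j$ or no message; then it receives the messages sent to it in that round; then it updates its local state. Channels are reliable. A failure pattern $F$ is a subset of $\{(i,j,r)\}$, where $(i,j,r)\in F$ means $i$'s round-$r$ message to $j$ would be delivered if sent; if $(i,j,r)\notin F$ then $(i,j',r')\notin F$ for all $j'$ and $r'>r$. Agent $i$ is correct if $(i,j,r)\in F$ for all $j,r$, faulty otherwise. In a system with at most $f$ crash failures only failure patterns with at most $f$ faulty agents occur. $V$ is a finite set of proposal values; the private type $\theta_i$ is a strict total order on $V$. A (deterministic) strategy $s_i$ maps $\theta_i$ to a function from (round $r$, messages received in rounds $1..r$) to (messages for round $r+1$, a decision in $V\cup\{\top\}$ or $\bot$), $\top\notin V$; each agent decides at most once. A protocol is a profile $\vec s$; the run $R(F,\vec\theta,\vec s)$ is determined. Legal profile: for every admissible $F$ and every $\vec\theta$: Termination (every correct agent eventually decides), Uniform Agreement (no two agents decide differently), Validity (any decision is an element of $V$ that is the most preferred value of some agent). Utility of $i$: $0$ if $i$ crashes in $F$;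 if consensus holds with decision $d$, a positive value strictly increasing in $i$'s preference for $d$; $-\infty$ if consensus is violated. Colluders $C$ may use strategies depending on all colluders' types. Original definition: $C$ can strategically manipulate a legal $\vec s$ if there is $\vec s'_C$ with (a) $(\vec s_{-C},\vec s'_C)$ legal, and (b) some admissible $F$ and some $\vec\theta$ in which all members of $C$ have the same most preferred value, such that some $i\in C$ has strictly higher utility under $(\vec s_{-C},\vec s'_C)$ than under $\vec s$. A $(c,f)$-resilient consensus protocol is a legal profile that no group of size at most $c$ can strategically manipulate, in a system with at most $f$ crash failures. *)

(* Defs.v *)
From Stdlib Require Import Reals.
From mathcomp Require Import all_boot.

Set Implicit Arguments.
Unset Strict Implicit.
Unset Printing Implicit Defensive.

(* [lt w v] means "v is strictly preferred to w".                      *)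
Definition strict_total_order (V : eqType) (lt : rel V) : Prop :=
  irreflexive lt /\ transitive lt /\ (forall x y, x != y -> lt x y || lt y x).

Definition Pref (V : eqType) := { lt : rel V | strict_total_order lt }.

Definition prefers (V : eqType) (th : Pref V) (v w : V) : bool := sval th w v.

Definition most_pref (V : eqType) (th : Pref V) (v : V) : Prop :=
  forall w, w != v -> prefers th v w.

(* Agents are 'I_n.  A message vector [msgs n M] is, for outgoing      *)
(* messages, indexed by the recipient (None = no message), and, for    *)
(* the messages received in one round, indexed by the sender (None =   *)
(* nothing received).  A history is the list of the message vectors    *)
(* received in rounds 1..r (its length is the current round r).        *)
Definition msgs (n : nat) (M : Type) := 'I_n -> option M.
Definition hist (n : nat) (M : Type) := seq (msgs n M).

(* NoDec = bottom (no decision now); DecTop = the special value top;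
   DecVal v = decide v. *)
Inductive decision (V : Type) := NoDec | DecTop | DecVal of V.
Arguments NoDec {V}.
Arguments DecTop {V}.

(* A (deterministic) strategy: given the private type, maps the history
   of received messages (rounds 1..r) to the messages for round r+1 and a
   decision (or bottom). *)
Definition strategy (n : nat) (M : Type) (V : eqType) :=
  Pref V -> hist n M -> msgs n M * decision V.

(* A generalized profile: agent i's behaviour may depend on the whole type
   vector (used for colluders, whose strategies may depend on all
   colluders' types). *)
Definition gprofile (n : nat) (M : Type) (V : eqType) :=
  'I_n -> ('I_n -> Pref V) -> hist n M -> msgs n M * decision V.

Definition of_strats n M (V : eqType) (s : 'I_n -> strategy n M V)
  : gprofile n M V := fun i th h => s i (th i) h.

Definition mix n M (V : eqType) (s : 'I_n -> strategy n M V) (C : {set 'I_n})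
  (d : gprofile n M V) : gprofile n M V :=
  fun i th h => if i \in C then d i th h else s i (th i) h.

Definition depends_only_on n M (V : eqType) (C : {set 'I_n}) (d : gprofile n M V)
  : Prop :=
  forall i th th', (forall j, j \in C -> th j = th' j) -> d i th = d i th'.

(* Failure patterns.  [F i j r] = i's round-r message to j would be    *)
(* delivered if sent (rounds are r >= 1).                              *)
Definition fpattern (n : nat) := 'I_n -> 'I_n -> nat -> bool.

Definition correct n (F : fpattern n) (i : 'I_n) : Prop :=
  forall j r, 0 < r -> F i j r.

Definition faulty n (F : fpattern n) (i : 'I_n) : Prop := ~ correct F i.

(* crash-failure pattern with at most f faulty agents *)
Definition admissible n (f : nat) (F : fpattern n) : Prop :=
  (forall i j r, 0 < r -> ~~ F i j r -> forall j' r', r < r' -> ~~ F i j' r')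
  /\ exists S : {set 'I_n}, #|S| <= f /\ forall i, i \notin S -> correct F i.

Fixpoint hists n M (V : eqType) (P : gprofile n M V) (F : fpattern n)
  (th : 'I_n -> Pref V) (r : nat) : 'I_n -> hist n M :=
  match r with
  | 0 => fun _ => [::]
  | r'.+1 => fun j =>
      rcons (hists P F th r' j)
            (fun i => if F i j r'.+1 then (P i th (hists P F th r' i)).1 j
                      else None)
  end.

Definition out_dec n M (V : eqType) (P : gprofile n M V) (F : fpattern n)
  (th : 'I_n -> Pref V) (i : 'I_n) (r : nat) : decision V :=
  (P i th (hists P F th r i)).2.

(* agent i has not crashed during rounds 1..r, so it takes its step at
   time r (outputs its round-(r+1) messages and its decision) *)
Definition alive n (F : fpattern n) (i : 'I_n) (r : nat) : Prop :=
  forall j r', 0 < r' <= r -> F i j r'.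

(* Each agent decides at most once: its decision is the first non-bottom
   decision it outputs while alive. *)
Definition decided n M (V : eqType) (P : gprofile n M V) (F : fpattern n)
  (th : 'I_n -> Pref V) (i : 'I_n) (d : decision V) : Prop :=
  d <> NoDec /\
  exists r, alive F i r /\ out_dec P F th i r = d /\
            forall r', r' < r -> out_dec P F th i r' = NoDec.

Definition consensus n M (V : eqType) (P : gprofile n M V) (F : fpattern n)
  (th : 'I_n -> Pref V) : Prop :=
  (forall i, correct F i -> exists d, decided P F th i d) /\
  (forall i j d d', decided P F th i d -> decided P F th j d' -> d = d') /\
  (forall i d, decided P F th i d ->
     exists v k, d = DecVal v /\ most_pref (th k) v).

Definition legal n M (V : eqType) (f : nat) (P : gprofile n M V) : Prop :=
  forall F th, admissible f F -> consensus P F th.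

(* Utilities.  Values are in R extended with -oo (None = -oo).         *)
Definition utility_ok n (V : eqType) (u : 'I_n -> Pref V -> V -> R) : Prop :=
  (forall i th v, Rlt R0 (u i th v)) /\
  (forall i th v w, prefers th v w -> Rlt (u i th w) (u i th v)).

Definition ult (x y : option R) : Prop :=
  match x, y with
  | None, Some _ => True
  | Some a, Some b => Rlt a b
  | _, _ => False
  end.

Definition ule (x y : option R) : Prop :=
  match x, y with
  | None, _ => True
  | Some a, Some b => Rle a b
  | Some _, None => False
  end.

Definition utility n M (V : eqType) (u : 'I_n -> Pref V -> V -> R)
  (P : gprofile n M V) (F : fpattern n) (th : 'I_n -> Pref V) (i : 'I_n)
  (x : option R) : Prop :=
  (faulty F i /\ x = Some R0) \/
  (correct F i /\ consensus P F th /\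
     exists v, decided P F th i (DecVal v) /\ x = Some (u i (th i) v)) \/
  (correct F i /\ ~ consensus P F th /\ x = None).

(* Strategic manipulation.  The flags select the variant:              *)
(*  same_top = true, no_worse = false : the original definition;       *)
(*  same_top = false                  : colluders need not share their *)
(*                                      most preferred value;          *)
(*  no_worse = true                   : additionally no colluder is    *)
(*                                      worse off.                     *)
Definition can_manipulate (same_top no_worse : bool) n M (V : eqType)
  (u : 'I_n -> Pref V -> V -> R) (f : nat) (s : 'I_n -> strategy n M V)
  (C : {set 'I_n}) : Prop :=
  exists d : gprofile n M V,
    depends_only_on C d /\
    (* (a) *) legal f (mix s C d) /\
    (* (b) *) exists F th,
      admissible f F /\
      (same_top -> exists v, forall i, i \in C -> most_pref (th i) v) /\
      (exists i, i \in C /\ exists x y,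
          utility u (mix s C d) F th i x /\ utility u (of_strats s) F th i y
          /\ ult y x) /\
      (no_worse -> forall j, j \in C -> exists x y,
          utility u (mix s C d) F th j x /\ utility u (of_strats s) F th j y
          /\ ule y x).

Definition resilient (same_top no_worse : bool) n M (V : eqType)
  (u : 'I_n -> Pref V -> V -> R) (c f : nat) (s : 'I_n -> strategy n M V)
  : Prop :=
  legal f (of_strats s) /\
  forall C : {set 'I_n}, #|C| <= c -> ~ can_manipulate same_top no_worse u f s C.

(* Main.v *)
Require Import Defs.
From Stdlib Require Import Reals Classical FunctionalExtensionality.
From mathcomp Require Import all_boot.
Set Implicit Arguments. Unset Strict Implicit. Unset Printing Implicit Defensive.

Lemma hists_ext n M (V:eqType) (P1 P2 : gprofile n M V) F th1 th2 :
  (forall i, P1 i th1 = P2 i th2) -> forall r j, hists P1 F th1 r j = hists P2 F th2 r j.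
Proof.
move=> H; elim=> [|r IH] j //=.
rewrite IH; congr rcons; apply: functional_extensionality => i.
by rewrite IH H.
Qed.

Lemma decided_ext n M (V:eqType) (P1 P2 : gprofile n M V) F th1 th2 :
  (forall i, P1 i th1 = P2 i th2) -> forall i d, decided P1 F th1 i d -> decided P2 F th2 i d.
Proof.
move=> H i d [Hd [r [Ha [Ho Hb]]]]; split=> //; exists r; split=> //.
have E : forall r, out_dec P1 F th1 i r = out_dec P2 F th2 i r.
  by move=> r0; rewrite /out_dec (hists_ext F H) H.
split; first by rewrite -E.
by move=> r' lr; rewrite -E; apply: Hb.
Qed.

Lemma hists_agree n M (V:eqType) (P : gprofile n M V) (F1 F2 : fpattern n) th R :
  (forall i j r, 0 < r -> r <= R -> F1 i j r = F2 i j r) ->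
  forall r j, r <= R -> hists P F1 th r j = hists P F2 th r j.
Proof.
move=> H; elim=> [|r IH] j hr //=.
rewrite IH ?(ltnW hr) //; congr rcons; apply: functional_extensionality => i.
by rewrite H // IH // ltnW.
Qed.

Lemma decided_transfer n M (V:eqType) (P : gprofile n M V) (F1 F2 : fpattern n) th R i d :
  (forall i j r, 0 < r -> r <= R -> F1 i j r = F2 i j r) ->
  (forall r, alive F1 i r) ->
  (exists r, r <= R /\ out_dec P F2 th i r = d /\
     forall r', r' < r -> out_dec P F2 th i r' = NoDec) -> d <> NoDec ->
  decided P F1 th i d.
Proof.
move=> H Ha [r [hr [Ho Hb]]] Hd; split=> //; exists r; split=> //.
have E : forall r0, r0 <= R -> out_dec P F1 th i r0 = out_dec P F2 th i r0.
  by move=> r0 h0; rewrite /out_dec (hists_agree P th H).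
split; first by rewrite E.
move=> r' lr; rewrite E; first exact: Hb.
exact: leq_trans (ltnW lr) hr.
Qed.

Definition keyf (V : finType) (x v : V) : nat := if v == x then 0 else (enum_rank v).+1.
Definition ltk (V : finType) (x : V) : rel V := fun w v => keyf x v < keyf x w.

Lemma keyf_inj (V : finType) (x : V) : injective (keyf x).
Proof.
move=> v w; rewrite /keyf; case: eqP => [->|_]; case: eqP => [->|_] //.
by case=> /ord_inj e; apply: enum_rank_inj.
Qed.

Lemma ltk_sto (V : finType) (x : V) : strict_total_order (ltk x).
Proof.
split; first by move=> v; rewrite /ltk ltnn.
split; first by move=> y z w; rewrite /ltk => h1 h2; exact: ltn_trans h2 h1.
move=> v w ne; rewrite /ltk.
case: (ltngtP (keyf x v) (keyf x w)) => // /keyf_inj e.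
by rewrite e eqxx in ne.
Qed.

Definition mkPref (V : finType) (x : V) : Pref V := exist _ (ltk x) (ltk_sto x).

Lemma top_mk (V : finType) (x : V) : most_pref (mkPref x) x.
Proof. by move=> w /negbTE nw; rewrite /prefers /= /ltk /keyf eqxx nw. Qed.

Lemma top_uniq (V : eqType) (th : Pref V) v w : most_pref th v -> most_pref th w -> v = w.
Proof.
case: th => lt hlt hv hw; have [irr [tr _]] := hlt; apply/eqP; apply/negP => /negP ne.
have ne' : w != v by rewrite eq_sym.
have a1 := hv w ne'; have a2 := hw v ne.
move: a1 a2; rewrite /prefers /= => a1 a2.
by have := tr _ _ _ a1 a2; rewrite irr.
Qed.

Definition F0 n : fpattern n := fun _ _ _ => true.

Lemma key (V : finType) n (u : 'I_n -> Pref V -> V -> R) (hu : utility_ok u) M f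
  (s : 'I_n -> strategy n M V) (nw : bool) (a b : 'I_n) th th' v v' :
  legal f (of_strats s) -> a != b ->
  (forall i, th' i = if i == a then th b else th i) ->
  decided (of_strats s) (@F0 n) th b (DecVal v) ->
  decided (of_strats s) (@F0 n) th' b (DecVal v') ->
  prefers (th b) v' v ->
  (nw -> 0 < f) ->
  can_manipulate false nw u f s [set a; b].
Proof.
move=> Hleg ab Hth D1 D2 Hpr Hf.
have Eth : th' = (fun i => if i == a then th b else th i)
  by apply: functional_extensionality.
subst th'.
set C := [set a; b].
pose d : gprofile n M V := fun i th0 => s i (th0 b).
have Hmix : forall th0 i, mix s C d i th0 =
   of_strats s i (fun k => if k == a then th0 b else th0 k).
  move=> th0 i; rewrite /mix /of_strats /d !inE.
  case: (i =P a) => [->|_] //=; case: (i =P b) => [->|_] //.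
have Hmix' : forall th0 i, of_strats s i (fun k => if k == a then th0 b else th0 k)
   = mix s C d i th0 by move=> th0 i; rewrite Hmix.
have Hlm : legal f (mix s C d).
  move=> F1 th0 HF.
  have [T [A Vd]] := Hleg F1 (fun k => if k == a then th0 b else th0 k) HF.
  split; [|split].
  - move=> i Hc; have [d0 Hd0] := T i Hc; exists d0.
    exact (decided_ext (Hmix' th0) Hd0).
  - move=> i j d1 d2 H1 H2.
    exact (A _ _ _ _ (decided_ext (Hmix th0) H1) (decided_ext (Hmix th0) H2)).
  - move=> i d1 H1; have [w [k [-> Hk]]] := Vd i d1 (decided_ext (Hmix th0) H1).
    exists w, (if k == a then b else k); split=> //.
    by move: Hk; case: (k == a).
have gen : forall F, admissible f F -> correct F b -> (nw -> faulty F a) ->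
    decided (of_strats s) F th b (DecVal v) ->
    decided (of_strats s) F (fun i => if i == a then th b else th i) b (DecVal v') ->
    can_manipulate false nw u f s C.
  move=> F HF Hb Ha E1 E2.
  exists d; split; first by move=> i t1 t2 H; rewrite /d H // !inE eqxx orbT.
  split=> //; exists F, th; split=> //; split=> //; split.
  - exists b; split; first by rewrite !inE eqxx orbT.
    exists (Some (u b (th b) v')), (Some (u b (th b) v)); split; [|split].
    + right; left; split=> //; split; first exact: Hlm F th HF.
      exists v'; split=> //; exact (decided_ext (Hmix' th) E2).
    + right; left; split=> //; split; first exact: Hleg F th HF.
      by exists v.
    + by rewrite /=; apply: hu.2.
  - move=> /Ha Hfa j; rewrite !inE => /orP [/eqP ->|/eqP ->].
    + exists (Some R0), (Some R0); split; first by left.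
      by split; [left | apply: Rle_refl].
    + exists (Some (u b (th b) v')), (Some (u b (th b) v)); split; [|split].
      * right; left; split=> //; split; first exact: Hlm F th HF.
        exists v'; split=> //; exact (decided_ext (Hmix' th) E2).
      * right; left; split=> //; split; first exact: Hleg F th HF.
        by exists v.
      * by rewrite /=; apply: Rlt_le; apply: hu.2.
case: nw Hf gen => Hf gen; last first.
  apply: gen => //.
  split; first by [].
  by exists set0; rewrite cards0.
have f1 := Hf isT.
case: D1 => _ [t1 [_ [O1 B1]]].
case: D2 => _ [t2 [_ [O2 B2]]].
pose Rr := maxn t1 t2.
pose FR : fpattern n := fun i j r => (i != a) || (r <= Rr).
have agr : forall i j r, 0 < r -> r <= Rr -> FR i j r = @F0 n i j r.
  by move=> i j r _ hr; rewrite /FR hr orbT.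
have ba : b != a by rewrite eq_sym.
have corb : correct FR b by move=> j r _; rewrite /FR ba.
apply: (gen FR).
- split.
  + move=> i j r _; rewrite /FR /= negb_or negbK => /andP [/eqP -> hRr] j' r' hr'.
    rewrite eqxx /= -ltnNge; rewrite -ltnNge in hRr; exact: ltn_trans hRr hr'.
  + exists [set a]; rewrite cards1; split=> // i; rewrite inE => Hi j r _.
    by rewrite /FR Hi.
- exact: corb.
- move=> _ Hc; have := Hc a Rr.+1 (ltn0Sn _); by rewrite /FR eqxx /= ltnn.
- apply: (decided_transfer agr) => //.
  + by move=> r j r' /andP [h _]; apply: corb.
  + exists t1; split; first by rewrite leq_maxl.
    by split.
- apply: (decided_transfer agr) => //.
  + by move=> r j r' /andP [h _]; apply: corb.
  + exists t2; split; first by rewrite leq_maxr.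
    by split.
Qed.

Lemma chain (D : nat -> Prop) n : D n -> ~ D 0 -> exists k, k < n /\ ~ D k /\ D k.+1.
Proof.
elim: n => [//|n IH] Dn D0.
case: (classic (D n)) => h.
  by have [k [kn Hk]] := IH h D0; exists k; split=> //; exact: ltnW.
by exists n.
Qed.

Lemma notres (V : finType) (hV : 3 <= #|V|) (n : nat) (hn : 2 <= n)
  (u : 'I_n -> Pref V -> V -> R) (hu : utility_ok u) (nw : bool) M c f
  (s : 'I_n -> strategy n M V) :
  2 <= c -> (nw -> 0 < f) -> ~ resilient false nw u c f s.
Proof.
move=> hc hf [Hleg Hres].
have /card_gt1P [x [y [_ _ xy]]] : 1 < #|V| by exact: leq_trans hV.
pose P := mkPref x; pose Q := mkPref y.
pose T k : 'I_n -> Pref V := fun i => if i < k then P else Q.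
have corr0 : forall i, correct (@F0 n) i by [].
have adm0 : admissible f (@F0 n) by split=> //; exists set0; rewrite cards0.
have out : forall k i, exists w, decided (of_strats s) (@F0 n) (T k) i (DecVal w)
    /\ (w = x \/ w = y).
  move=> k i; have [T1 [A Vd]] := Hleg _ (T k) adm0.
  have [d Hd] := T1 i (corr0 i).
  have [w [k0 [Ew Hw]]] := Vd _ _ Hd; subst d; exists w; split=> //.
  move: Hw; rewrite /T; case: (k0 < k) => Hw.
    by left; apply: (top_uniq Hw (@top_mk _ x)).
  by right; apply: (top_uniq Hw (@top_mk _ y)).
pose Dx k := exists i, decided (of_strats s) (@F0 n) (T k) i (DecVal x).
have n0 : 0 < n by exact: leq_trans hn.
have Dn : Dx n.
  exists (Ordinal n0); have [T1 [A Vd]] := Hleg _ (T n) adm0.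
  have [w [Hw _]] := out n (Ordinal n0); have [w' [k0 [Ew Hw']]] := Vd _ _ Hw.
  case: Ew => Ew; rewrite -Ew in Hw'.
  move: Hw'; rewrite /T ltn_ord => Hw'.
  by rewrite -(top_uniq Hw' (@top_mk _ x)).
have D0 : ~ Dx 0.
  case=> i Hi; have [T1 [A Vd]] := Hleg _ (T 0) adm0.
  have [w [k0 [Ew Hw']]] := Vd _ _ Hi; case: Ew => Ew; rewrite -Ew in Hw'.
  move: Hw'; rewrite /T ltn0 => Hw'.
  by move: xy; rewrite (top_uniq Hw' (@top_mk _ y)) eqxx.
have [k [kn [nDk Dk1]]] := chain Dn D0.
have decy : forall i, decided (of_strats s) (@F0 n) (T k) i (DecVal y).
  move=> i; have [w [Hw [E|E]]] := out k i; subst w => //.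
  by case: nDk; exists i.
have decx : forall i, decided (of_strats s) (@F0 n) (T k.+1) i (DecVal x).
  move=> i; have [T1 [A Vd]] := Hleg _ (T k.+1) adm0.
  have [w [Hw _]] := out k.+1 i; case: Dk1 => j Hj.
  by have E := A _ _ _ _ Hj Hw; rewrite E.
pose kk := Ordinal kn.
have prPxy : prefers P x y by apply: top_mk; rewrite eq_sym.
have prQyx : prefers Q y x by apply: top_mk.
case: (posnP k) => [k0|kpos].
-
  have k1n : k.+1 < n by rewrite k0.
  pose b := Ordinal k1n.
  have ab : kk != b by rewrite -val_eqE /= neq_ltn ltnSn.
  apply: (Hres [set kk; b]); first by rewrite cards2 ab.
  apply: (@key V n u hu M f s nw kk b (T k.+1) (T k) x y) => //.
  + move=> i; rewrite /T; case: (i =P kk) => [->|ne] /=; first by rewrite !ltnn.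
    have hik : (i:nat) != k by apply/eqP => e; apply: ne; apply: val_inj.
    by rewrite [X in _ = (if X then _ else _)]ltnS [X in _ = (if X then _ else _)]leq_eqVlt (negbTE hik).
  + by rewrite /T /= ltnn.
- have b0 : 0 < n by [].
  pose b := Ordinal b0.
  have ab : kk != b by rewrite -val_eqE /= neq_ltn kpos orbT.
  apply: (Hres [set kk; b]); first by rewrite cards2 ab.
  apply: (@key V n u hu M f s nw kk b (T k) (T k.+1) y x) => //.
  + move=> i; rewrite /T; case: (i =P kk) => [->|ne] /=; first by rewrite ltnSn kpos.
    have hik : (i:nat) != k by apply/eqP => e; apply: ne; apply: val_inj.
    by rewrite [X in (if X then _ else _) = _]ltnS [X in (if X then _ else _) = _]leq_eqVlt (negbTE hik).
  + by rewrite /T /= kpos.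
Qed.

Theorem proposition3 (V : finType) (hV : 3 <= #|V|) (n : nat) (hn : 2 <= n)
  (u : 'I_n -> Pref V -> V -> R) (hu : utility_ok u) :
  (forall (M : Type) (c f : nat), 2 <= c ->
     forall s : 'I_n -> strategy n M V, ~ resilient false false u c f s) /\
  (forall (M : Type) (c f : nat), 2 <= c -> 1 <= f ->
     forall s : 'I_n -> strategy n M V, ~ resilient false true u c f s).
Proof.
split.
- by move=> M c f hc s; apply: (notres hV hn hu).
- by move=> M c f hc hf s; apply: (notres hV hn hu).
Qed.
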